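(* Let $\Gamma$ be a graph of minimum degree $\delta>0$ and maximum degree $\Delta$, and let $k$ be an integer. (a) If $0<\tau\le\min\{\frac{k+\delta}{2\delta},\frac{k+\Delta}{2\Delta}\}$, then every global offensive $k$-alliance in $\Gamma$ is a $\tau$-dominating set. (b) If $\max\{\frac{k+\delta}{2\delta},\frac{k+\Delta}{2\Delta}\}\le\tau\le 1$, then every $\tau$-dominating set in $\Gamma$ is a global offensive $k$-alliance.
   Context: Graphs are finite and simple. For $S\subseteq V$ and $v\in V$, $\delta(v)$ is the degree of $v$, $\delta_S(v)$ the number of neighbours of $v$ in $S$, $\overline{S}=V\setminus S$, and $\partial(S)$ the set of vertices of $\overline{S}$ with a neighbour in $S$. A nonempty $S\subseteq V$ is an offensive $k$-alliance if $\delta_S(v)\ge\delta_{\overline{S}}(v)+k$ for all $v\in\partial(S)$, and a global offensive $k$-alliance if moreover it is dominating (every vertex of $\overline{S}$ has a neighbour in $S$). For $\tau\in(0,1]$, a set $S\subseteq V$ is $\tau$-dominating if $\delta_S(v)\ge\tau\,\delta(v)$ for every $v\in\overline{S}$. *)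

(* Defs.v *)
From mathcomp Require Import all_boot all_order all_algebra.
Set Implicit Arguments. Unset Strict Implicit. Unset Printing Implicit Defensive.
Import Order.TTheory GRing.Theory Num.Theory.

Definition simple_graph (T : finType) (e : rel T) : Prop :=
  symmetric e /\ irreflexive e.

Section Alliances.
Variables (T : finType) (e : rel T).

Definition deg_in (S : {set T}) (v : T) : nat := #|[set u in S | e v u]|.
Definition deg (v : T) : nat := #|[set u | e v u]|.
Definition boundary (S : {set T}) : {set T} :=
  [set v in ~: S | [exists u in S, e v u]].

Definition min_degree (d : nat) : Prop :=
  (exists v, deg v = d) /\ forall v, d <= deg v.
Definition max_degree (d : nat) : Prop :=
  (exists v, deg v = d) /\ forall v, deg v <= d.

Definition offensive_alliance (k : int) (S : {set T}) : Prop :=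
  S != set0 /\
  forall v, v \in boundary S ->
    ((deg_in S v)%:Z >= (deg_in (~: S) v)%:Z + k)%R.

Definition dominating (S : {set T}) : Prop :=
  forall v, v \in ~: S -> exists2 u, u \in S & e v u.

Definition global_offensive_alliance (k : int) (S : {set T}) : Prop :=
  offensive_alliance k S /\ dominating S.

Definition tau_dominating (R : realFieldType) (tau : R) (S : {set T}) : Prop :=
  forall v, v \in ~: S -> (tau * (deg v)%:R <= (deg_in S v)%:R)%R.

End Alliances.

(* Main.v *)
Require Import Defs.
From mathcomp Require Import all_boot all_order all_algebra.
From mathcomp Require Import ring lra.
Import Order.TTheory GRing.Theory Num.Theory.
Local Open Scope ring_scope.

Local Close Scope ring_scope.
Lemma deg_split (T : finType) (e : rel T) (S : {set T}) v :
  deg e v = (deg_in e S v + deg_in e (~: S) v)%N.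
Proof.
rewrite /deg /deg_in -(cardsID S [set u | e v u]); congr addn;
  apply: eq_card => u; rewrite !inE andbC //.
Qed.

Local Open Scope ring_scope.
Lemma lin_interp (R : realFieldType) (t k d a b : R) :
  a <= d -> d <= b -> 2 * t * a <= k + a -> 2 * t * b <= k + b ->
  2 * t * d <= k + d.
Proof.
move=> h1 h2 h3 h4.
have [h|h] := lerP (2 * t) 1.
- have : 0 <= (1 - 2 * t) * (d - a) by apply: mulr_ge0; lra.
  nra.
- have : 0 <= (2 * t - 1) * (b - d) by apply: mulr_ge0; lra.
  nra.
Qed.

Lemma lin_interp2 (R : realFieldType) (t k d a b : R) :
  a <= d -> d <= b -> k + a <= 2 * t * a -> k + b <= 2 * t * b ->
  k + d <= 2 * t * d.
Proof.
move=> h1 h2 h3 h4.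
have [h|h] := lerP (2 * t) 1.
- have : 0 <= (1 - 2 * t) * (b - d) by apply: mulr_ge0; lra.
  nra.
- have : 0 <= (2 * t - 1) * (d - a) by apply: mulr_ge0; lra.
  nra.
Qed.

Theorem mainTheorem4 (R : realFieldType) (T : finType) (e : rel T)
  (dmin dmax : nat) (k : int) (tau : R) :
  simple_graph e ->
  min_degree e dmin -> (0 < dmin)%N -> max_degree e dmax ->
  ((0 < tau)%R ->
    (tau <= Num.min ((k%:~R + dmin%:R) / (2 * dmin%:R))
                    ((k%:~R + dmax%:R) / (2 * dmax%:R)))%R ->
    forall S : {set T}, global_offensive_alliance e k S -> tau_dominating e tau S)
  /\
  ((0 < tau)%R ->
   (Num.max ((k%:~R + dmin%:R) / (2 * dmin%:R))
            ((k%:~R + dmax%:R) / (2 * dmax%:R)) <= tau)%R ->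
    (tau <= 1)%R ->
    forall S : {set T}, tau_dominating e tau S -> global_offensive_alliance e k S).
Proof.
move=> _ [[v0 Hv0] Hmin] dpos [[v1 Hv1] Hmax].
have dminR : (0 : R) < dmin%:R by rewrite ltr0n.
have dmaxpos : (0 < dmax)%N by rewrite -Hv1; apply: leq_trans dpos (Hmin v1).
have dmaxR : (0 : R) < dmax%:R by rewrite ltr0n.
have dle : forall v, (dmin%:R : R) <= (deg e v)%:R /\ (deg e v)%:R <= (dmax%:R : R).
  by move=> v; rewrite !ler_nat Hmin Hmax.
split.
- move=> tpos; rewrite le_min => /andP[h1 h2] S [[_ Hoff] Hdom] v vS.
  rewrite ler_pdivlMr ?mulr_gt0 // in h1.
  rewrite ler_pdivlMr ?mulr_gt0 // in h2.
  have vb : v \in boundary e S.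
    case: (Hdom v vS) => u uS evu.
    by rewrite /boundary inE vS /=; apply/existsP; exists u; rewrite uS.
  have := Hoff v vb; rewrite -(ler_int R) rmorphD /= => h.
  have {h} : (deg_in e (~: S) v)%:R + (k%:~R : R) <= (deg_in e S v)%:R by [].
  have := @deg_split T e S v => hd.
  have [d1 d2] := dle v.
  have := @lin_interp R tau k%:~R (deg e v)%:R dmin%:R dmax%:R d1 d2.
  rewrite hd natrD => hi h.
  have : 2 * tau * ((deg_in e S v)%:R + (deg_in e (~: S) v)%:R) <=
      k%:~R + ((deg_in e S v)%:R + (deg_in e (~: S) v)%:R).
    apply: hi; lra.
  lra.
- move=> tpos; rewrite ge_max => /andP[h1 h2] t1 S Htd.
  rewrite ler_pdivrMr ?mulr_gt0 // in h1.
  rewrite ler_pdivrMr ?mulr_gt0 // in h2.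
  have posS : forall v, v \in ~: S -> (0 < deg_in e S v)%N.
    move=> v vS; have := Htd v vS; have [d1 _] := dle v.
    rewrite -(ltr0n R) => h; apply: lt_le_trans h.
    apply: mulr_gt0 => //; lra.
  have dom : dominating e S.
    move=> v vS; have := posS v vS; rewrite /deg_in card_gt0 => /set0Pn[u].
    by rewrite inE => /andP[uS evu]; exists u.
  split; last exact: dom.
  split.
    apply/negP => /eqP S0.
    have : v0 \in ~: S by rewrite S0 !inE.
    move/posS; rewrite /deg_in S0.
    suff -> : [set u in set0 | e v0 u] = set0 by rewrite cards0.
    by apply/setP => u; rewrite !inE.
  move=> v; rewrite inE => /andP[vS _].
  rewrite -(ler_int R) rmorphD /=.
  suff : (deg_in e (~: S) v)%:R + (k%:~R : R) <= (deg_in e S v)%:R by [].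
  have hd := @deg_split T e S v.
  have [d1 d2] := dle v.
  have := @lin_interp2 R tau k%:~R (deg e v)%:R dmin%:R dmax%:R d1 d2.
  have ht := Htd v vS.
  rewrite hd natrD in ht * => hi.
  have : k%:~R + ((deg_in e S v)%:R + (deg_in e (~: S) v)%:R) <=
      2 * tau * ((deg_in e S v)%:R + (deg_in e (~: S) v)%:R).
    apply: hi; lra.
  lra.
Qed.
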